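(* Let $n\geq 2$ and $k\geq 3$. If $c$ is an exact $k$-coloring of $\mathcal{B}_n$ with no rainbow induced copy of $\mathcal{C}_3$, then $k\leq \binom{n}{\lceil n/2\rceil}+1$.
   Context: $\mathcal{B}_n$ denotes the Boolean lattice of all subsets of $[n]$ ordered by inclusion. An exact $k$-coloring of $\mathcal{B}_n$ is a surjective map $\mathcal{B}_n\to[k]$. A rainbow induced copy of $\mathcal{C}_3$ is a chain $X\subsetneq Y\subsetneq Z$ whose three sets have pairwise distinct colors. *)

(* Defs.v *)
From mathcomp Require Import all_boot all_order.
Set Implicit Arguments. Unset Strict Implicit. Unset Printing Implicit Defensive.

(* The Boolean lattice B_n is modelled as {set 'I_n} ordered by inclusion.
   An exact k-coloring is a surjective map {set 'I_n} -> 'I_k. *)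
Definition exact_coloring (n k : nat) (c : {set 'I_n} -> 'I_k) : Prop :=
  forall i : 'I_k, exists X : {set 'I_n}, c X = i.

Definition rainbow_C3 (n k : nat) (c : {set 'I_n} -> 'I_k)
  (X Y Z : {set 'I_n}) : Prop :=
  [/\ X \proper Y, Y \proper Z,
      c X != c Y, c Y != c Z & c X != c Z].

Definition no_rainbow_C3 (n k : nat) (c : {set 'I_n} -> 'I_k) : Prop :=
  forall X Y Z : {set 'I_n}, ~ rainbow_C3 c X Y Z.

Definition ceil_half (n : nat) : nat := n.+1./2.

(* Main.v *)
Require Import Defs.
From mathcomp Require Import all_boot all_order.
From mathcomp Require Import zify.

Lemma bin_up n m : m.*2.+1 <= n -> 'C(n, m) <= 'C(n, m.+1).
Proof.
move=> h; have e := mul_bin_left n m.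
have : m.+1 * 'C(n, m) <= m.+1 * 'C(n, m.+1).
  rewrite e leq_mul2r; apply/orP; right; lia.
by rewrite leq_pmul2l.
Qed.

Lemma bin_down n m : n <= m.*2.+1 -> 'C(n, m.+1) <= 'C(n, m).
Proof.
move=> h; have e := mul_bin_left n m.
have : m.+1 * 'C(n, m.+1) <= m.+1 * 'C(n, m).
  rewrite e leq_mul2r; apply/orP; right; lia.
by rewrite leq_pmul2l.
Qed.

Lemma bin_max n m : 'C(n, m) <= 'C(n, n.+1./2).
Proof.
set h := n.+1./2.
have h2 : h.*2 <= n.+1 by rewrite /h; rewrite -{2}(odd_double_half n.+1); lia.
have h3 : n <= h.*2 by rewrite /h; move: (odd_double_half n.+1); case: (odd n.+1) => /=; lia.
case: (leqP m h) => hm.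
  have : forall d, 'C(n, h - d) <= 'C(n, h).
    elim=> [|d IH]; first by rewrite subn0.
    case: (ltnP d h) => hd.
      apply: leq_trans IH; have -> : h - d = (h - d.+1).+1 by lia.
      apply: bin_up; lia.
    by have -> : h - d.+1 = h - d by lia.
  by move=> /(_ (h - m)); have -> : h - (h - m) = m by lia.
have : forall d, 'C(n, h + d) <= 'C(n, h).
  elim=> [|d IH]; first by rewrite addn0.
  apply: leq_trans IH; rewrite addnS; apply: bin_down; lia.
by move=> /(_ (m - h)); have -> : h + (m - h) = m by lia.
Qed.

Section Lym.
Variable T : finType.
Variable F : {set {set T}}.
Hypothesis anti : forall A B, A \in F -> B \in F -> A \subset B -> A = B.

Definition w (S A : {set T}) := #|A|`! * (#|S| - #|A|)`!.
Definition g (S : {set T}) := \sum_(A in F | A \subset S) w S A.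

Lemma g_split S : S \notin F -> g S = \sum_(x in S) g (S :\ x).
Proof.
move=> SF; rewrite /g.
have step : forall A, (A \in F) && (A \subset S) ->
   w S A = \sum_(x in S | x \notin A) w (S :\ x) A.
  move=> A /andP [AF AS].
  have AnS : A != S by apply: contraNneq SF => <-.
  have ltAS : #|A| < #|S| by apply: proper_card; rewrite properEneq AnS.
  rewrite (eq_bigr (fun _ => #|A|`! * (#|S| - #|A|).-1`!)); last first.
    move=> x /andP [xS _]; rewrite /w; congr (_ * _`!).
    move: (cardsD1 x S); rewrite xS; lia.
  rewrite sum_nat_const.
  have -> : #|[pred x in S | x \notin A]| = #|S| - #|A|.
    have -> : #|[pred x in S | x \notin A]| = #|S :\: A|.
      by apply: eq_card => x; rewrite !inE andbC.
    by rewrite cardsD (setIidPr AS).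
  rewrite /w mulnCA; congr (_ * _).
  case e: (#|S| - #|A|) => [|d]; first lia.
  by rewrite factS.
rewrite (eq_bigr _ step) (exchange_big_dep (fun x => x \in S)); last first.
  by move=> A x _ /andP [].
apply: eq_bigr => x xS; apply: eq_bigl => A.
by rewrite subsetD1 xS /= andbA.
Qed.

Lemma g_bound m (S : {set T}) : #|S| <= m -> g S <= #|S|`!.
Proof.
elim: m S => [|m IH] S hS.
  have S0 : S = set0 by apply/eqP; rewrite -cards_eq0; lia.
  case: (boolP (S \in F)) => SF.
    rewrite /g (bigD1 S) /=; last by rewrite SF subxx.
    rewrite big1 ?addn0; first by rewrite /w subnn muln1.
    by move=> A /andP [/andP [AF AS] AnS]; case/eqP: AnS; apply: anti.
  by rewrite g_split // S0 big_set0.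
case: (boolP (S \in F)) => SF.
  rewrite /g (bigD1 S) /=; last by rewrite SF subxx.
  rewrite big1 ?addn0; first by rewrite /w subnn muln1.
  by move=> A /andP [/andP [AF AS] AnS]; case/eqP: AnS; apply: anti.
rewrite g_split //.
apply: (@leq_trans (\sum_(x in S) #|S|.-1`!)).
  apply: leq_sum => x xS.
  have e : #|S :\ x| = #|S|.-1 by move: (cardsD1 x S); rewrite xS; lia.
  rewrite -e; apply: IH; lia.
rewrite sum_nat_const; case: #|S| => [|s] //=.
Qed.

Lemma sperner : #|F| <= 'C(#|T|, #|T|.+1./2).
Proof.
set C := 'C(_, _).
have gb := @g_bound #|T| [set: T] (max_card _).
rewrite cardsT in gb.
rewrite -(leq_pmul2r (fact_gt0 #|T|)).
apply: (@leq_trans (C * g [set: T])); last by rewrite leq_mul2l gb orbT.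
rewrite /g big_distrr /= -sum_nat_const.
have -> : \sum_(i in F) #|T|`! = \sum_(A in F | A \subset [set: T]) #|T|`!.
  by apply: eq_bigl => A; rewrite subsetT andbT.
apply: leq_sum => A _.
rewrite /w cardsT -(bin_fact (max_card A)) leq_mul2r; apply/orP; right.
exact: bin_max.
Qed.
End Lym.

Theorem corollary2p2 (n k : nat) (c : {set 'I_n} -> 'I_k) :
  2 <= n -> 3 <= k -> exact_coloring c -> no_rainbow_C3 c ->
  k <= 'C(n, ceil_half n) + 1.
Proof.
move=> _ hk surj norb.
set a := c set0.
pose rep (i : 'I_k) := odflt set0 [pick X | c X == i].
have crep : forall i, c (rep i) = i.
  move=> i; rewrite /rep; case: pickP => [X /eqP //|none].
  by case: (surj i) => X hX; move: (none X); rewrite hX eqxx.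
have repinj : injective rep by move=> i j e; rewrite -(crep i) -(crep j) e.
pose F := [set rep i | i in [set~ a]].
have anti : forall A B, A \in F -> B \in F -> A \subset B -> A = B.
  move=> A B /imsetP [i ia ->] /imsetP [j ja ->] sub.
  case: (eqVneq i j) => [-> //|ij]; exfalso.
  apply: (norb set0 (rep i) (rep j)); split.
  - rewrite proper0; apply/eqP => e; move: ia; rewrite in_setC1 -(crep i) e eqxx.
    done.
  - rewrite properEneq sub andbT; apply/eqP => /repinj e; by rewrite e eqxx in ij.
  - by rewrite crep; move: ia; rewrite in_setC1 eq_sym.
  - by rewrite !crep.
  - by rewrite crep; move: ja; rewrite in_setC1 eq_sym.
have := @sperner _ F anti.
rewrite card_imset // cardsC1 !card_ord /ceil_half.
lia.
Qed.
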